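(* For any DRC-semigroup $S$, the category $\mathcal C(S)$ is a biordered category under the orders $\le_l,\le_r$ defined by $a\le_l b\iff a=pb$ for some $p\in\mathbf P(S)$ with $p\le D(b)$, and $a\le_r b\iff a=bq$ for some $q\in\mathbf P(S)$ with $q\le R(b)$; its left and right restrictions are ${}_p\lfloor a=pa$ ($p\le D(a)$) and $a\rfloor_q=aq$ ($q\le R(a)$).
   Context: A DRC-semigroup is $(S,\cdot,D,R)$, $(S,\cdot)$ a semigroup, $D,R:S\to S$ with, for all $a,b$: $D(a)a=a$, $aR(a)=a$; $D(ab)=D(aD(b))$, $R(ab)=R(R(a)b)$; $D(ab)=D(a)D(ab)D(a)$, $R(ab)=R(b)R(ab)R(b)$; $R(D(a))=D(a)$, $D(R(a))=R(a)$. Projections: $\mathbf P(S)=\{D(a):a\in S\}$, partially ordered by $p\le q\iff p=pq=qp$. The small category $\mathcal C(S)$ has morphism set $S$, object (identity) set $\mathbf P(S)$, domain $\mathbf d(a)=D(a)$, codomain $\mathbf r(a)=R(a)$, and composition $a\circ b=ab$ defined when $R(a)=D(b)$. A small category is identified with its morphisms, and objects with identities ($v\mathcal C$); $a\circ b$ is defined iff $\mathbf r(a)=\mathbf d(b)$. A left-ordered category is $(\mathcal C,\le)$ with a partial order such that: $a\le b\Rightarrow\mathbf d(a)\le\mathbf d(b)$, $\mathbf r(a)\le\mathbf r(b)$; if $a\le b$, $c\le c'$, $\mathbf r(a)=\mathbf d(c)$, $\mathbf r(b)=\mathbf d(c')$ then $a\circ c\le b\circ c'$; for every object $p\le\mathbf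 d(a)$ there is a unique $u\le a$ with $\mathbf d(u)=p$ (the left restriction ${}_p\lfloor a$). A right-ordered category is defined dually (unique $v\le a$ with $\mathbf r(v)=q$ for each object $q\le\mathbf r(a)$, denoted $a\rfloor_q$). A biordered category is $(\mathcal C,\le_l,\le_r)$ with $(\mathcal C,\le_l)$ left-ordered, $(\mathcal C,\le_r)$ right-ordered, and $\le_l,\le_r$ restricting to the same order on objects. *)

(* Defs.v *)
Record DRC_semigroup (S : Type) (mul : S -> S -> S) (D R : S -> S) : Prop := {
  drc_assoc : forall a b c, mul a (mul b c) = mul (mul a b) c;
  drc_D_left : forall a, mul (D a) a = a;
  drc_R_right : forall a, mul a (R a) = a;
  drc_D_mul : forall a b, D (mul a b) = D (mul a (D b));
  drc_R_mul : forall a b, R (mul a b) = R (mul (R a) b);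
  drc_D_sand : forall a b, D (mul a b) = mul (mul (D a) (D (mul a b))) (D a);
  drc_R_sand : forall a b, R (mul a b) = mul (mul (R b) (R (mul a b))) (R b);
  drc_RD : forall a, R (D a) = D a;
  drc_DR : forall a, D (R a) = R a
}.

Definition proj {S : Type} (D : S -> S) (p : S) : Prop := exists a, p = D a.
Definition proj_le {S : Type} (mul : S -> S -> S) (p q : S) : Prop :=
  p = mul p q /\ p = mul q p.

Definition drc_le_l {S : Type} (mul : S -> S -> S) (D : S -> S) (a b : S) : Prop :=
  exists p, proj D p /\ proj_le mul p (D b) /\ a = mul p b.
Definition drc_le_r {S : Type} (mul : S -> S -> S) (D R : S -> S) (a b : S) : Prop :=
  exists q, proj D q /\ proj_le mul q (R b) /\ a = mul b q.

(** * Small categories, identified with their morphisms.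
    [d], [r] : domain and codomain (valued in identities),
    [comp a b] : composite a∘b (first a, then b), meaningful when r a = d b. *)
Definition is_obj {M : Type} (d r : M -> M) (e : M) : Prop := d e = e /\ r e = e.

Definition is_category {M : Type} (d r : M -> M) (comp : M -> M -> M) : Prop :=
  (forall a, is_obj d r (d a) /\ is_obj d r (r a)) /\
  (forall a b, r a = d b -> d (comp a b) = d a /\ r (comp a b) = r b) /\
  (forall a, comp (d a) a = a /\ comp a (r a) = a) /\
  (forall a b c, r a = d b -> r b = d c -> comp a (comp b c) = comp (comp a b) c).

Definition is_partial_order {M : Type} (le : M -> M -> Prop) : Prop :=
  (forall a, le a a) /\
  (forall a b, le a b -> le b a -> a = b) /\
  (forall a b c, le a b -> le b c -> le a c).

Definition left_ordered {M : Type} (d r : M -> M) (comp : M -> M -> M)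
    (le : M -> M -> Prop) : Prop :=
  is_category d r comp /\ is_partial_order le /\
  (forall a b, le a b -> le (d a) (d b) /\ le (r a) (r b)) /\
  (forall a b c c', le a b -> le c c' -> r a = d c -> r b = d c' ->
      le (comp a c) (comp b c')) /\
  (forall a p, is_obj d r p -> le p (d a) ->
      exists u, (le u a /\ d u = p) /\ forall u', le u' a -> d u' = p -> u' = u).

Definition right_ordered {M : Type} (d r : M -> M) (comp : M -> M -> M)
    (le : M -> M -> Prop) : Prop :=
  is_category d r comp /\ is_partial_order le /\
  (forall a b, le a b -> le (d a) (d b) /\ le (r a) (r b)) /\
  (forall a b c c', le a b -> le c c' -> r a = d c -> r b = d c' ->
      le (comp a c) (comp b c')) /\
  (forall a q, is_obj d r q -> le q (r a) ->
      exists v, (le v a /\ r v = q) /\ forall v', le v' a -> r v' = q -> v' = v).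

Definition biordered {M : Type} (d r : M -> M) (comp : M -> M -> M)
    (lel ler : M -> M -> Prop) : Prop :=
  left_ordered d r comp lel /\ right_ordered d r comp ler /\
  (forall p q, is_obj d r p -> is_obj d r q -> (lel p q <-> ler p q)).

(* Main.v *)
Require Import Defs.
From Stdlib Require Import Setoid.

Theorem proposition3p10 (S : Type) (mul : S -> S -> S) (D R : S -> S)
    (HS : DRC_semigroup S mul D R) :
  biordered D R mul (drc_le_l mul D) (drc_le_r mul D R) /\
  (* left restriction: for p in P(S) with p <= D(a), pa is the unique u <=_l a with D(u) = p *)
  (forall a p, proj D p -> proj_le mul p (D a) ->
     drc_le_l mul D (mul p a) a /\ D (mul p a) = p /\
     (forall u, drc_le_l mul D u a -> D u = p -> u = mul p a)) /\
  (* right restriction: for q in P(S) with q <= R(a), aq is the unique v <=_r a with R(v) = q *)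
  (forall a q, proj D q -> proj_le mul q (R a) ->
     drc_le_r mul D R (mul a q) a /\ R (mul a q) = q /\
     (forall v, drc_le_r mul D R v a -> R v = q -> v = mul a q)).
Proof.
  destruct HS as [assoc DL RRt Dm Rm Ds Rs RD DR].
  assert (DD : forall a, D (D a) = D a).
  { intro a. transitivity (D (R (D a))). rewrite RD; reflexivity. rewrite DR; apply RD. }
  assert (RR : forall a, R (R a) = R a).
  { intro a. transitivity (R (D (R a))). rewrite DR; reflexivity. rewrite RD; apply DR. }
  assert (pD : forall p, proj D p -> D p = p).
  { intros p [x ->]. apply DD. }
  assert (pR : forall p, proj D p -> R p = p).
  { intros p [x ->]. apply RD. }
  assert (pI : forall p, proj D p -> mul p p = p).
  { intros p Hp. rewrite <- (pR p Hp) at 2. apply RRt. }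
  assert (prD : forall a, proj D (D a)) by (intro a; exists a; reflexivity).
  assert (prR : forall a, proj D (R a)) by (intro a; exists (R a); symmetry; apply DR).
  assert (sand : forall e x, proj D e -> x = mul (mul e x) e -> proj_le mul x e).
  { intros e x He H. split.
    - transitivity (mul (mul (mul e x) e) e). 2: rewrite <- H; reflexivity.
      rewrite <- (assoc (mul e x) e e), pI by exact He. exact H.
    - transitivity (mul e (mul (mul e x) e)). 2: rewrite <- H; reflexivity.
      rewrite (assoc e (mul e x) e), (assoc e e x), pI by exact He. exact H. }
  assert (LD : forall p b, proj D p -> proj_le mul p (D b) -> D (mul p b) = p).
  { intros p b Hp [H1 H2]. rewrite Dm, <- H1. apply pD, Hp. }
  assert (LR : forall q b, proj D q -> proj_le mul q (R b) -> R (mul b q) = q).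
  { intros q b Hq [H1 H2]. rewrite Rm, <- H2. apply pR, Hq. }
  split; [split; [|split] | split].
  -
    split; [|split; [|split; [|split]]].
    + split; [|split; [|split]].
      * intro a. split; split. apply DD. apply RD. apply DR. apply RR.
      * intros a b H. split. rewrite Dm, <- H, RRt. reflexivity. rewrite Rm, H, DL. reflexivity.
      * intro a; split; [apply DL | apply RRt].
      * intros; apply assoc.
    + split; [|split].
      * intro a. exists (D a). split; [apply prD | split; [split; symmetry; apply pI, prD | symmetry; apply DL]].
      * intros a b [p [Hp [Hpb ->]]] [q [Hq [Hqa Eb]]].
        rewrite (LD p b Hp Hpb) in Hqa.
        assert (Db : D b = q).
        { rewrite Eb at 1. apply LD; auto. rewrite (LD p b Hp Hpb). exact Hqa. }
        rewrite Db in Hpb. destruct Hpb as [h1 h2], Hqa as [k1 k2].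
        assert (Epq : p = q) by (transitivity (mul p q); [exact h1 | symmetry; exact k2]).
        rewrite Epq, <- Db. apply DL.
      * intros a b c [p [Hp [Hpb ->]]] [q [Hq [Hqc ->]]].
        rewrite (LD q c Hq Hqc) in Hpb.
        destruct Hpb as [h1 h2], Hqc as [k1 k2].
        exists p. split; auto. split. split.
        -- transitivity (mul p q); [exact h1|].
           transitivity (mul p (mul q (D c))); [rewrite <- k1; reflexivity|].
           rewrite assoc, <- h1; reflexivity.
        -- transitivity (mul q p); [exact h2|].
           transitivity (mul (mul (D c) q) p); [rewrite <- k2; reflexivity|].
           rewrite <- assoc, <- h2; reflexivity.
        -- rewrite assoc, <- h1; reflexivity.
    + intros a b [p [Hp [Hpb ->]]]. split.
      * rewrite (LD p b Hp Hpb). exists p. split; auto. split. rewrite DD; exact Hpb.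
        destruct Hpb; assumption.
      * assert (PL : proj_le mul (R (mul p b)) (R b)).
        { apply sand. apply prR.
          assert (E : mul (mul p b) (R b) = mul p b) by (rewrite <- assoc, RRt; reflexivity).
          pose proof (Rs (mul p b) (R b)) as X. rewrite E, RR in X. exact X. }
        exists (R (mul p b)). split; [apply prR | split; [rewrite DR; exact PL | destruct PL; assumption]].
    + intros a b c c' [p [Hp [Hpb ->]]] [q [Hq [Hqc ->]]] Hac Hbc.
      exists p. split; auto. split. rewrite Dm, <- Hbc, RRt. exact Hpb.
      rewrite (LD q c' Hq Hqc) in Hac. rewrite <- Hac.
      rewrite assoc, RRt, assoc. reflexivity.
    + intros a p [Hp1 Hp2] [p' [Hp' [Hp'a Ep]]].
      rewrite DD in Hp'a.
      assert (p = p') by (rewrite Ep; destruct Hp'a; symmetry; assumption).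
      clear Ep; subst p.
      exists (mul p' a). split. split. exists p'; auto. apply LD; auto.
      intros u' [r [Hr [Hra ->]]] Hd. rewrite (LD r a Hr Hra) in Hd. subst r. reflexivity.
  -
    split; [|split; [|split; [|split]]].
    + split; [|split; [|split]].
      * intro a. split; split. apply DD. apply RD. apply DR. apply RR.
      * intros a b H. split. rewrite Dm, <- H, RRt. reflexivity. rewrite Rm, H, DL. reflexivity.
      * intro a; split; [apply DL | apply RRt].
      * intros; apply assoc.
    + split; [|split].
      * intro a. exists (R a). split; [apply prR | split; [split; symmetry; apply pI, prR | symmetry; apply RRt]].
      * intros a b [q [Hq [Hqb ->]]] [q' [Hq' [Hqa Eb]]].
        rewrite (LR q b Hq Hqb) in Hqa.
        assert (Rb : R b = q').
        { rewrite Eb at 1. apply LR; auto. rewrite (LR q b Hq Hqb). exact Hqa. }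
        rewrite Rb in Hqb. destruct Hqb as [h1 h2], Hqa as [k1 k2].
        assert (Eq : q = q') by (transitivity (mul q q'); [exact h1 | symmetry; exact k2]).
        rewrite Eq, <- Rb. apply RRt.
      * intros a b c [p [Hp [Hpb ->]]] [q [Hq [Hqc ->]]].
        rewrite (LR q c Hq Hqc) in Hpb.
        destruct Hpb as [h1 h2], Hqc as [k1 k2].
        exists p. split; auto. split. split.
        -- transitivity (mul p q); [exact h1|].
           transitivity (mul p (mul q (R c))); [rewrite <- k1; reflexivity|].
           rewrite assoc, <- h1; reflexivity.
        -- transitivity (mul q p); [exact h2|].
           transitivity (mul (mul (R c) q) p); [rewrite <- k2; reflexivity|].
           rewrite <- assoc, <- h2; reflexivity.
        -- rewrite <- assoc, <- h2; reflexivity.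
    + intros a b [q [Hq [Hqb ->]]]. split.
      * assert (PL : proj_le mul (D (mul b q)) (D b)).
        { apply sand. apply prD. apply Ds. }
        exists (D (mul b q)). split; [apply prD | split; [rewrite RD; exact PL | destruct PL; assumption]].
      * rewrite (LR q b Hq Hqb). exists q. split; auto. split. rewrite RR; exact Hqb.
        destruct Hqb; assumption.
    + intros a b c c' [q [Hq [Hqb ->]]] [q2 [Hq2 [Hqc ->]]] Hac Hbc.
      exists q2. split; auto. split. rewrite Rm, Hbc, DL. exact Hqc.
      rewrite (LR q b Hq Hqb) in Hac. rewrite Hac.
      rewrite <- assoc, DL, assoc. reflexivity.
    + intros a q [Hq1 Hq2] [q' [Hq' [Hq'a Eq]]].
      rewrite RR in Hq'a.
      assert (q = q') by (rewrite Eq; destruct Hq'a; symmetry; assumption).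
      clear Eq; subst q.
      exists (mul a q'). split. split. exists q'; auto. apply LR; auto.
      intros v [r [Hr [Hra ->]]] Hd. rewrite (LR r a Hr Hra) in Hd. subst r. reflexivity.
  - intros p q [Dp Rp] [Dq Rq]. split.
    + intros [p' [Hp' [H ->]]]. rewrite Dq in H. destruct H as [h1 h2].
      exists p'. split; [exact Hp'|]. split; [rewrite Rq; split; [exact h1|]|].
      exact h2. rewrite <- h1. exact h2.
    + intros [q' [Hq' [H ->]]]. rewrite Rq in H. destruct H as [h1 h2].
      exists q'. split; [exact Hq'|]. split; [rewrite Dq; split; [exact h1| exact h2]|].
      rewrite <- h2. exact h1.
  - intros a p Hp Hpa. split. exists p; auto. split. apply LD; auto.
      intros u [r [Hr [Hra ->]]] Hd. rewrite (LD r a Hr Hra) in Hd. subst; reflexivity.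
  - intros a q Hq Hqa. split. exists q; auto. split. apply LR; auto.
      intros v [r [Hr [Hra ->]]] Hd. rewrite (LR r a Hr Hra) in Hd. subst; reflexivity.
Qed.
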